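(* Let $d\ge 2$. There exist constants $C>1$, $c\in(0,1)$ and $0<c'\le C'$, depending only on $d$, such that the following holds for every finite field $\mathbb F_q$ of characteristic greater than two. If $E,F\subset\mathbb F_q^d$ satisfy $|E||F|\ge Cq^{d+1}$, then there exists a set $E_0\subset E$ with $c'q^{-1}|E|\le|E_0|\le C'q^{-1}|E|$ such that $|\Pi(E_0,F)|\ge c\,q$.
   Context: $\mathbb F_q$ is a finite field with $q$ elements and characteristic greater than two. For $E,F\subset\mathbb F_q^d$, $\Pi(E,F)=\{x\cdot y: x\in E,\ y\in F\}$ with $x\cdot y=\sum_i x_iy_i$. *)

(* Defs.v *)
From HB Require Import structures.
From mathcomp Require Import all_boot all_order all_algebra all_field.
Set Implicit Arguments. Unset Strict Implicit. Unset Printing Implicit Defensive.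
Import Order.TTheory GRing.Theory Num.Theory.
Local Open Scope ring_scope.

Definition dotv (K : fieldType) (d : nat) (x y : 'rV[K]_d) : K :=
  \sum_(i < d) x 0 i * y 0 i.

Definition dotset (K : finFieldType) (d : nat) (E F : {set 'rV[K]_d}) : {set K} :=
  [set dotv x y | x in E, y in F].

(* Main.v *)
Require Import Defs.
From HB Require Import structures.
From mathcomp Require Import all_boot all_order all_algebra all_field.
From mathcomp Require Import zify lra.
Import Order.TTheory GRing.Theory Num.Theory.

Lemma cs_nat (T : finType) (A : pred T) (a : T -> nat) :
  ((\sum_(i in A) a i) ^ 2 <= #|A| * \sum_(i in A) a i ^ 2)%N.
Proof.
rewrite -(leq_pmul2l (isT : 0 < 2)%N).
have -> : (2 * (\sum_(i in A) a i) ^ 2 = \sum_(i in A) \sum_(j in A) 2 * (a i * a j))%N.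
  rewrite expnS expn1 big_distrl /= big_distrr /=; apply: eq_bigr => i _.
  rewrite big_distrr /= big_distrr /=; apply: eq_bigr => j _; by [].
have -> : (2 * (#|A| * \sum_(i in A) a i ^ 2) =
   \sum_(i in A) \sum_(j in A) (a i ^ 2 + a j ^ 2))%N.
  under [RHS]eq_bigr do rewrite big_split /= sum_nat_const.
  rewrite big_split /= sum_nat_const -big_distrr /=.
  by rewrite mul2n -addnn.
apply: leq_sum => i _; apply: leq_sum => j _.
have := (nat_AGM2 (a i) (a j)).1; rewrite sqrnD; lia.
Qed.

Section Dot.
Variable K : finFieldType.
Variable d : nat.
Local Open Scope ring_scope.
Implicit Types x y z w : 'rV[K]_d.

Lemma dotvDl x y z : dotv (x + y) z = dotv x z + dotv y z.
Proof. by rewrite /dotv -big_split; apply: eq_bigr => j _; rewrite mxE mulrDl. Qed.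

Lemma dotvZl (t : K) x z : dotv (t *: x) z = t * dotv x z.
Proof. by rewrite /dotv mulr_sumr; apply: eq_bigr => j _; rewrite mxE mulrA. Qed.

Lemma dotvBr x y z : dotv x (y - z) = dotv x y - dotv x z.
Proof. by rewrite /dotv -sumrB; apply: eq_bigr => j _; rewrite !mxE mulrBr. Qed.

Lemma hyper z : z != 0 ->
  (#|K| * #|[set x : 'rV[K]_d | dotv x z == 0%R]| <= #|K| ^ d)%N.
Proof.
move=> nz.
have [i Hi] : exists i, z 0 i != 0.
  case: (pickP (fun i => z 0 i != 0)) => [i Hi | H]; first by exists i.
  case/eqP: nz; apply/rowP => j; rewrite !mxE.
  by apply/eqP; rewrite -[_ == _]negbK H.
pose w : 'rV[K]_d := \row_j (if j == i then (z 0 i)^-1 else 0).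
have wz : dotv w z = 1.
  rewrite /dotv (bigD1 i) //= big1 => [|j /negbTE ji]; last by rewrite !mxE ji mul0r.
  by rewrite !mxE eqxx mulVf // addr0.
pose H0 := [set x : 'rV[K]_d | dotv x z == 0%R].
pose f := fun p : K * 'rV[K]_d => p.2 + p.1 *: w.
have inj : {in setX [set: K] H0 &, injective f}.
  move=> [t x] [t' x']; rewrite !inE /= => /eqP hx /eqP hx' e.
  have ht : t = t'.
    have := congr1 (fun v => dotv v z) e; rewrite /f /= !dotvDl !dotvZl hx hx' wz.
    by rewrite !add0r !mulr1.
  by move: e; rewrite /f /= ht => /addIr ->.
have := card_in_imset inj; rewrite cardsX cardsT => <-.
have := max_card (mem [set f x | x in setX [set: K] H0]); rewrite card_mx mul1n; apply: leq_trans; apply: subset_leq_card; done.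
Qed.

End Dot.

Lemma cs_supp (T : finType) (A : {set T}) (a : T -> nat) :
  (forall t, t \notin A -> a t = 0%N) ->
  ((\sum_t a t) ^ 2 <= #|A| * \sum_t a t ^ 2)%N.
Proof.
move=> H.
have -> : (\sum_t a t = \sum_(t in A) a t)%N.
  rewrite [RHS]big_mkcond; apply: eq_bigr => t _.
  by case: ifP => // /negbT /H ->.
have h := cs_nat _ (mem A) a. apply: leq_trans h _. rewrite leq_mul2l; apply/orP; right.
rewrite [X in (X <= _)%N]big_mkcond; apply: leq_sum => t _; by case: ifP.
Qed.

Section Count.
Variable K : finFieldType.
Variable d : nat.
Variables E F : {set 'rV[K]_d}.
Local Notation q := #|K|.

Definition nn (x : 'rV[K]_d) (t : K) : nat := \sum_(y in F) (dotv x y == t).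
Definition SS (x : 'rV[K]_d) : nat :=
  \sum_(y in F) \sum_(y' in F) (dotv x y == dotv x y').

Lemma SS_sq x : SS x = \sum_t nn x t ^ 2.
Proof.
rewrite /SS /nn.
under [RHS]eq_bigr => t _ do rewrite expnS expn1 big_distrl /=.
rewrite [RHS]exchange_big /=; apply: eq_bigr => y _.
under [RHS]eq_bigr => t _ do rewrite big_distrr /=.
rewrite [RHS]exchange_big /=; apply: eq_bigr => y' _.
rewrite (bigD1 (dotv x y)) //= eqxx mul1n big1 ?addn0; first by rewrite eq_sym.
by move=> t /negbTE ht; rewrite eq_sym ht.
Qed.

Lemma nn_sum x : (\sum_t nn x t = #|F|)%N.
Proof.
rewrite /nn exchange_big /= -sum1_card; apply: eq_bigr => y _.
by rewrite (bigD1 (dotv x y)) //= eqxx big1 // => t /negbTE; rewrite eq_sym => ->.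
Qed.

Lemma F2_le x (A : {set K}) : [set dotv x y | y in F] \subset A ->
  (#|F| ^ 2 <= #|A| * SS x)%N.
Proof.
move=> sub; rewrite SS_sq -(nn_sum x); apply: cs_supp => t tA.
rewrite /nn big1 // => y yF; case: eqP => // e; case/negP: tA.
by apply: (subsetP sub); rewrite -e; apply: imset_f.
Qed.

Lemma SS_total :
  (q * \sum_x SS x <= #|F| * (q * q ^ d) + #|F| ^ 2 * q ^ d)%N.
Proof.
rewrite /SS big_distrr /=.
under eq_bigr => x _ do rewrite big_distrr /=.
rewrite exchange_big /=.
apply: (@leq_trans (\sum_(y in F) (q * q ^ d + #|F| * q ^ d))%N); last first.
  by rewrite sum_nat_const mulnDr !mulnA [(#|F| ^ 2)%N]expnS expn1.
apply: leq_sum => y yF.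
under eq_bigr => x _ do rewrite big_distrr /=.
rewrite exchange_big /=.
rewrite (bigD1 y) //=.
apply: leq_add.
  rewrite -big_distrr /= leq_mul2l; apply/orP; right.
  apply: (@leq_trans #|'rV[K]_d|); last by rewrite card_mx mul1n.
  rewrite -sum1_card; apply: leq_sum => x _; by case: eqP.
apply: (@leq_trans (\sum_(y' in F | y' != y) q ^ d)%N); last first.
  rewrite sum_nat_const leq_mul2r; apply/orP; right; apply: subset_leq_card.
  by apply/subsetP => z /andP[].
apply: leq_sum => y' /andP [yF' ny].
rewrite -big_distrr /=.
have -> : (\sum_x (dotv x y == dotv x y') = #|[set x : 'rV[K]_d | dotv x (y - y') == 0%R]|)%N.
  rewrite -sum1dep_card [RHS]big_mkcond; apply: eq_bigr => x _.
  by rewrite dotvBr subr_eq0; case: eqP.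
apply: hyper; by rewrite subr_eq0 eq_sym.
Qed.

End Count.

Lemma good (K : finFieldType) d (E F : {set 'rV[K]_d}) :
  (2 * #|K| ^ d.+1 <= #|E| * #|F|)%N ->
  exists2 x0, x0 \in E & (#|K| <= 2 * #|[set dotv x0 y | y in F]|)%N.
Proof.
move=> hyp.
case: (pickP [pred x | (x \in E) && (#|K| <= 2 * #|[set dotv x y | y in F]|)%N]) =>
  [x /andP [xE hx] | H]; first by exists x.
have hE : forall x, x \in E -> (2 * #|F| ^ 2 <= #|K| * SS _ _ F x)%N.
  move=> x xE; have := H x; rewrite /= xE /= => /negbT; rewrite -ltnNge => lt.
  have h1 := F2_le _ _ F x _ (subxx [set dotv x y | y in F]).
  rewrite -(leq_pmul2l (isT : (0 < 2)%N)) in h1.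
  apply: (leq_trans h1); rewrite mulnA leq_mul2r; apply/orP; right; exact: ltnW.
have hall : forall x, (#|F| ^ 2 <= #|K| * SS _ _ F x)%N.
  move=> x; have := @F2_le K d F x [set: K] (subsetT _); by rewrite cardsT.
have tot := SS_total _ d F.
rewrite big_distrr /= (bigID (mem E)) /= in tot.
have l1 : (#|E| * (2 * #|F| ^ 2) <= \sum_(i | i \in E) #|K| * SS _ _ F i)%N.
  by rewrite -sum_nat_const; apply: leq_sum => i; apply: hE.
have l2 : (#|[predC E]| * (#|F| ^ 2) <= \sum_(i | i \notin E) #|K| * SS _ _ F i)%N.
  by rewrite -sum_nat_const; apply: leq_sum => i _; apply: hall.
have cE := cardC (mem E).
rewrite card_mx mul1n in cE.
have q0 : (0 < #|K|)%N by apply/card_gt0P; exists 0%R.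
have Q0 : (0 < #|K| ^ d)%N by rewrite expn_gt0 q0.
rewrite expnS in hyp.
set e := #|E| in hyp l1 cE; set e' := #|[predC E]| in l2 cE.
set f := #|F| in hyp l1 l2 tot; set Q := (#|K| ^ d)%N in hyp cE tot Q0.
set q := #|K| in hyp tot q0 l1 l2.
exfalso.
set s1 := (\sum_(i in E) _)%N in l1 tot.
set s2 := (\sum_(i | i \notin E) _)%N in l2 tot.
have f0 : (0 < f)%N by nia.
have : (e * f ^ 2 <= f * (q * Q))%N by nia.
nia.
Qed.

Local Open Scope ring_scope.

Theorem theorem4p3 (R : realFieldType) (d : nat) (hd : (2 <= d)%N) :
  exists (C c c' C' : R),
    [/\ 1 < C, 0 < c < 1, 0 < c' & c' <= C'] /\
    forall (K : finFieldType), ~~ (2%N \in [pchar K]) ->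
    forall (E F : {set 'rV[K]_d}),
      C * (#|K|%:R) ^+ d.+1 <= (#|E| * #|F|)%:R ->
      exists2 E0 : {set 'rV[K]_d}, E0 \subset E &
        [/\ c' * (#|K|%:R)^-1 * #|E|%:R <= #|E0|%:R,
            #|E0|%:R <= C' * (#|K|%:R)^-1 * #|E|%:R &
            c * #|K|%:R <= #|dotset E0 F|%:R].
Proof.
exists 2, 2^-1, 1, 2; split.
  by split; [lra | apply/andP; split; lra | lra | lra].
move=> K _ E F hC.
have hn : (2 * #|K| ^ d.+1 <= #|E| * #|F|)%N.
  by rewrite -(ler_nat R) natrM natrX.
have [x0 x0E hx0] := @good _ _ E F hn.
set q := #|K| in hn hx0 *.
have q0 : (0 < q)%N by apply/card_gt0P; exists 0%R.
have q1 : (1 < q)%N.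
  have := max_card (mem [set (0:K); 1]); rewrite cards2 eq_sym oner_eq0 /=; exact: id.
have fQ : (#|F| <= q ^ d)%N.
  by have := max_card (mem F); rewrite card_mx mul1n.
have Q0 : (0 < q ^ d)%N by rewrite expn_gt0 q0.
have eq2 : (2 * q <= #|E|)%N.
  rewrite expnS in hn.
  have : (2 * q * q ^ d <= #|E| * q ^ d)%N.
    apply: leq_trans (leq_mul (leqnn _) fQ); by rewrite -mulnA.
  by rewrite leq_pmul2r.
set B := E :\ x0.
set k := (#|E| %/ q)%N.
have cB : #|B| = (#|E|).-1 by rewrite /B (cardsD1 x0 E) x0E.
have kB : (k <= #|B|)%N.
  rewrite cB /k -ltnS prednK; last by lia.
  rewrite ltn_divLR //; nia.
have : (0 < #|[set A : {set 'rV[K]_d} | A \subset B & #|A| == k]|)%N by rewrite cards_draws bin_gt0.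
case/card_gt0P => A; rewrite inE => /andP [sAB /eqP cA].
have x0A : x0 \notin A.
  by apply/negP => /(subsetP sAB); rewrite /B !inE eqxx.
exists (x0 |: A).
  apply/subsetP => z; rewrite in_setU1 => /orP [/eqP -> // | zA].
  by move: (subsetP sAB z zA); rewrite /B !inE => /andP [].
have cE0 : #|x0 |: A| = k.+1 by rewrite cardsU1 x0A cA.
have qR : (0 : R) < q%:R by rewrite ltr0n.
have n1 : (#|E| <= k.+1 * q)%N.
  rewrite {1}(divn_eq #|E| q) mulSn addnC leq_add2r; exact: ltnW (ltn_pmod _ q0).
have n2 : (k.+1 * q <= 2 * #|E|)%N.
  by rewrite mulSn /k; have := leq_trunc_div #|E| q; lia.
have n3 : (#|[set dotv x0 y | y in F]| <= #|dotset (x0 |: A) F|)%N.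
  apply: subset_leq_card; apply/subsetP => z /imsetP [y yF ->].
  by apply: imset2_f => //; rewrite setU11.
rewrite cE0; split.
- rewrite mul1r mulrC ler_pdivrMr // -natrM ler_nat; exact: n1.
- rewrite mulrAC ler_pdivlMr // -!natrM ler_nat; lia.
- have : (q%:R : R) <= 2 * #|dotset (x0 |: A) F|%:R.
    rewrite -natrM ler_nat; lia.
  lra.
Qed.
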